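(* There exists a $3$-partite $3$-uniform hypergraph $\mathcal{H}$ such that for every pair of vertices $p,q$ of $\mathcal{H}$, deleting $p$ and $q$ does not reduce the matching number, i.e. $\nu(\mathcal{H}-\{p,q\})=\nu(\mathcal{H})$.
   Context: An $r$-partite $r$-uniform hypergraph has a vertex set partitioned into $r$ parts $V_1,\dots,V_r$ and a set of edges, each edge containing exactly one vertex from each part. A matching is a set of pairwise disjoint edges; $\nu(\mathcal{H})$ is the maximum size of a matching. Deleting a set $S$ of vertices from $\mathcal{H}$ means removing the vertices of $S$ together with all edges containing a vertex of $S$; the result is denoted $\mathcal{H}-S$. *)

(* Defs.v *)
From mathcomp Require Import all_boot.
Set Implicit Arguments. Unset Strict Implicit. Unset Printing Implicit Defensive.

(* An r-partite r-uniform hypergraph on a finite vertex type V is given by a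
   partition map [part : V -> 'I_r] (vertex v lies in part V_(part v)) and an
   edge set [E : {set {set V}}] in which every edge contains exactly one
   vertex of each part. *)
Definition partite_edge (V : finType) (r : nat) (part : V -> 'I_r)
  (e : {set V}) : bool :=
  [forall i : 'I_r, #|[set v in e | part v == i]| == 1].

Definition partite_uniform (V : finType) (r : nat) (part : V -> 'I_r)
  (E : {set {set V}}) : bool :=
  [forall e in E, partite_edge part e].

Definition is_matching (V : finType) (E M : {set {set V}}) : bool :=
  (M \subset E) &&
  [forall e1 in M, forall e2 in M, (e1 != e2) ==> [disjoint e1 & e2]].

Definition nu (V : finType) (E : {set {set V}}) : nat :=
  \max_(M in powerset E | is_matching E M) #|M|.

(* H - S: remove the vertices of S and every edge containing one of them.
   (We keep the vertex type; removed vertices are isolated and irrelevant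
   for matchings.) *)
Definition delete_vertices (V : finType) (E : {set {set V}}) (S : {set V})
  : {set {set V}} :=
  [set e in E | [disjoint e & S]].

(* Main.v *)
Require Import Defs.
From mathcomp Require Import all_boot.
Set Implicit Arguments. Unset Strict Implicit. Unset Printing Implicit Defensive.

Definition V := ('I_3 * 'I_5)%type.
Definition vert (i j : nat) : V := (inord i, inord j).
Definition tr : seq (nat*nat*nat) := [:: (0,0,2); (0,4,0); (1,1,2); (1,2,3); (1,3,0); (2,0,3); (2,4,2); (3,1,4); (3,2,0); (3,4,1); (4,0,4); (4,1,1); (4,3,3)].
Definition L : seq (nat*nat*nat) := [:: (0,3,7); (0,3,9); (0,3,11); (0,4,7); (0,4,9); (0,4,11); (0,7,12); (0,8,11); (0,8,12); (0,9,12); (1,2,5); (1,2,10); (1,2,12); (1,3,7); (1,3,10); (1,3,11); (1,5,7); (1,5,11); (1,7,12); (2,5,8); (2,5,9); (2,8,10); (2,8,12); (2,9,10); (2,9,12); (3,6,7); (3,6,10); (3,6,11); (3,9,10); (4,5,7); (4,5,9); (4,5,11); (4,6,7); (4,6,10); (4,6,11); (4,9,10); (5,8,11); (6,7,12); (6,8,10); (6,8,11); (6,8,12)].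
Definition tri k := nth (0,0,0) tr k.
Definition es (k : nat) : {set V} :=
  let: (a,b,c) := tri k in [set vert 0 a; vert 1 b; vert 2 c].
Definition EE : {set {set V}} := [set es (val k) | k : 'I_13].
Definition memb (p : nat*nat) (t : nat*nat*nat) : bool :=
  let: (a,b,c) := t in
  [|| (p.1 == 0) && (p.2 == a), (p.1 == 1) && (p.2 == b) | (p.1 == 2) && (p.2 == c)].
Definition codes : seq (nat*nat) := [seq (i, x) | i <- iota 0 3, x <- iota 0 5].
Definition sh k l := has (fun c => memb c (tri k) && memb c (tri l)) codes.

Definition bnd_check := (size tr == 13) &&
  all (fun t => let: (a,b,c) := t in [&& a < 5, b < 5 & c < 5]) tr.
Lemma bnd_ok : bnd_check. Proof. by vm_compute. Qed.

Definition C1 := all (fun k1 => all (fun k2 => all (fun k3 => all (fun k4 =>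
   uniq [:: k1; k2; k3; k4] ==>
   [|| sh k1 k2, sh k1 k3, sh k1 k4, sh k2 k3, sh k2 k4 | sh k3 k4])
   (iota 0 13)) (iota 0 13)) (iota 0 13)) (iota 0 13).
Lemma C1_ok : C1. Proof. by vm_compute. Qed.

Definition Lok := all (fun m => let: (i,j,k) := m in
   [&& i < 13, j < 13, k < 13, ~~ sh i j, ~~ sh i k & ~~ sh j k]) L.
Lemma Lok_ok : Lok. Proof. by vm_compute. Qed.

Definition C2 := all (fun cp => all (fun cq => has (fun m => let: (i,j,k) := m in
   [&& ~~ memb cp (tri i), ~~ memb cp (tri j), ~~ memb cp (tri k),
       ~~ memb cq (tri i), ~~ memb cq (tri j) & ~~ memb cq (tri k)]) L) codes) codes.
Lemma C2_ok : C2. Proof. by vm_compute. Qed.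

Lemma ieq n (x : 'I_n.+1) m : m < n.+1 -> (x == inord m) = (val x == m).
Proof. by move=> Hm; rewrite -val_eqE /= inordK. Qed.

Lemma tri_bnd k : k < 13 -> let: (a,b,c) := tri k in [&& a < 5, b < 5 & c < 5].
Proof.
move=> Hk; move/andP: bnd_ok => [/eqP Hs /allP H].
by apply: H; rewrite /tri; apply: mem_nth; rewrite Hs.
Qed.

Lemma mem_es k (p : V) : k < 13 -> (p \in es k) = memb (val p.1, val p.2) (tri k).
Proof.
move=> /tri_bnd; rewrite /es /memb; case: (tri k) => [[a b] c] /and3P [Ha Hb Hc].
case: p => x y; by rewrite !inE /vert !xpair_eqE /= !ieq // -orbA.
Qed.

Lemma codes_mem (p : V) : (val p.1, val p.2) \in codes.
Proof.
case: p => [[x Hx] [y Hy]] /=; by apply/allpairsP; exists (x, y); rewrite !mem_iota /= Hx Hy.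
Qed.

Lemma codes_bnd c : c \in codes -> (c.1 < 3) && (c.2 < 5).
Proof. by case/allpairsP => [[i x]]; rewrite !mem_iota => -[Hi Hx ->] /=; move: Hi Hx => /andP[_ ->] /andP[_ ->]. Qed.

Lemma disjointP (T : finType) (A B : {set T}) :
  reflect (forall x, x \in A -> x \in B -> False) [disjoint A & B].
Proof.
rewrite disjoint_subset; apply: (iffP subsetP) => H x Hx.
- by move=> HB; move: (H x Hx); rewrite inE HB.
- by rewrite inE; apply/negP => /(H x Hx).
Qed.

Lemma disj_es k l : k < 13 -> l < 13 -> [disjoint es k & es l] = ~~ sh k l.
Proof.
move=> Hk Hl; apply/idP/idP.
- move=> /disjointP Hd; apply/hasP => [[c Hc /andP [H1 H2]]].
  move/andP: (codes_bnd Hc) => [Hc1 Hc2].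
  apply: (Hd (inord c.1, inord c.2)); rewrite mem_es //= !inordK //; by case: c Hc H1 H2 {Hc1 Hc2}.
- move=> Hn; apply/disjointP => p; rewrite !mem_es // => H1 H2.
  by move/hasP: Hn; apply; exists (val p.1, val p.2); rewrite ?codes_mem ?H1 ?H2.
Qed.

Lemma sh_refl k : k < 13 -> sh k k.
Proof.
move=> /tri_bnd; rewrite /sh; case E: (tri k) => [[a b] c] /and3P [Ha Hb Hc].
apply/hasP; exists (0, a); last by rewrite /memb /= !eqxx.
by apply/allpairsP; exists (0, a); rewrite !mem_iota /= Ha.
Qed.

Lemma es_in k : k < 13 -> es k \in EE.
Proof. by move=> Hk; apply/imsetP; exists (Ordinal Hk). Qed.

Lemma in_EE e : e \in EE -> exists2 k, k < 13 & e = es k.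
Proof. by case/imsetP => [[k Hk]] _ ->; exists k. Qed.

Lemma nu_ge (T : finType) (F M : {set {set T}}) : is_matching F M -> #|M| <= nu F.
Proof.
move=> HM; rewrite /nu.
apply: (@leq_bigmax_cond _ (fun M => (M \in powerset F) && is_matching F M) (fun M => #|M|)).
by rewrite powersetE HM andbT; case/andP: HM.
Qed.

Lemma nu_mono (T : finType) (F G : {set {set T}}) : F \subset G -> nu F <= nu G.
Proof.
move=> FG; apply/bigmax_leqP => M /andP [_ /andP [MF HM]]; apply: nu_ge.
by rewrite /is_matching HM (subset_trans MF FG).
Qed.

Lemma match_disj (T : finType) (F M : {set {set T}}) e f :
  is_matching F M -> e \in M -> f \in M -> e != f -> [disjoint e & f].
Proof.
move=> /andP [_ /forall_inP H] he hf hne.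
exact: (implyP (forall_inP (H e he) f hf) hne).
Qed.

Lemma iotaP k : k < 13 -> k \in iota 0 13.
Proof. by rewrite mem_iota. Qed.

Lemma nuEE : nu EE <= 3.
Proof.
apply/bigmax_leqP => M /andP [_ HM]; rewrite leqNgt; apply/negP => H4.
have HME : M \subset EE by case/andP: HM.
have key : forall e f k l, e \in M -> f \in M -> e != f -> k < 13 -> l < 13 ->
   e = es k -> f = es l -> ~~ sh k l && (k != l).
  move=> e f k l he hf hne hk hl Ee Ef; subst e f.
  rewrite -disj_es // (match_disj HM he hf hne) /=.
  by apply/eqP => kl; move: hne; rewrite kl eqxx.
have Hs : 3 < size (enum M) by rewrite -cardE.
have Hu := enum_uniq (mem M).
have Hmem : forall e, e \in enum M -> e \in M by move=> e; rewrite mem_enum.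
move: Hs Hu Hmem; case: (enum M) => [|e1 [|e2 [|e3 [|e4 s]]]] //= _ Hu Hmem.
have gk : forall e, e \in M -> exists2 k, k < 13 & e = es k.
  by move=> e he; apply: in_EE; apply: (subsetP HME).
have m1 : e1 \in M by apply: Hmem; rewrite !inE eqxx.
have [k1 h1 E1] := gk e1 m1.
have m2 : e2 \in M by apply: Hmem; rewrite !inE eqxx ?orbT.
have [k2 h2 E2] := gk e2 m2.
have m3 : e3 \in M by apply: Hmem; rewrite !inE eqxx ?orbT.
have [k3 h3 E3] := gk e3 m3.
have m4 : e4 \in M by apply: Hmem; rewrite !inE eqxx ?orbT.
have [k4 h4 E4] := gk e4 m4.
move: Hu; rewrite !in_cons !negb_or => /and5P[/and4P[n12 n13 n14 _] /and3P[n23 n24 _] /andP[n34 _] _ _].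
have /andP[s12 d12] := key _ _ _ _ m1 m2 n12 h1 h2 E1 E2.
have /andP[s13 d13] := key _ _ _ _ m1 m3 n13 h1 h3 E1 E3.
have /andP[s14 d14] := key _ _ _ _ m1 m4 n14 h1 h4 E1 E4.
have /andP[s23 d23] := key _ _ _ _ m2 m3 n23 h2 h3 E2 E3.
have /andP[s24 d24] := key _ _ _ _ m2 m4 n24 h2 h4 E2 E4.
have /andP[s34 d34] := key _ _ _ _ m3 m4 n34 h3 h4 E3 E4.
have U : uniq [:: k1; k2; k3; k4] by rewrite /= !inE !negb_or d12 d13 d14 d23 d24 d34.
move/allP: C1_ok => /(_ k1 (iotaP h1)) /allP /(_ k2 (iotaP h2)) /allP /(_ k3 (iotaP h3))
  /allP /(_ k4 (iotaP h4)) /implyP /(_ U).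
by rewrite (negbTE s12) (negbTE s13) (negbTE s14) (negbTE s23) (negbTE s24) (negbTE s34).
Qed.

Lemma es_nonempty_neq i j : i < 13 -> j < 13 -> [disjoint es i & es j] -> es i != es j.
Proof. by move=> hi hj Hd; apply/eqP => Eij; move: Hd; rewrite Eij disj_es // sh_refl. Qed.

Lemma lower (p q : V) : 3 <= nu (delete_vertices EE [set p; q]).
Proof.
move/allP: C2_ok => /(_ _ (codes_mem p)) /allP /(_ _ (codes_mem q)) /hasP [[[i j] k] HL Hm].
move/allP: Lok_ok => /(_ _ HL) /and5P [hi hj hk sij /andP [sik sjk]].
move: Hm; rewrite -!mem_es // => /and5P [pi pj pk qi /andP [qj qk]].
have dij : [disjoint es i & es j] by rewrite disj_es.
have dik : [disjoint es i & es k] by rewrite disj_es.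
have djk : [disjoint es j & es k] by rewrite disj_es.
set M := [set es i; es j; es k].
have cM : #|M| = 3.
  rewrite /M -setUA cardsU1 cards2 !inE negb_or !es_nonempty_neq //.
rewrite -{1}cM; apply: nu_ge; apply/andP; split.
  apply/subsetP => e; rewrite /M !inE -orbA => /or3P [] /eqP ->;
  rewrite es_in //=; apply/disjointP => x Hx;
  rewrite !inE => /orP [] /eqP Ex; subst x.
  - by rewrite Hx in pi.
  - by rewrite Hx in qi.
  - by rewrite Hx in pj.
  - by rewrite Hx in qj.
  - by rewrite Hx in pk.
  - by rewrite Hx in qk.
apply/forall_inP => e1 He1; apply/forall_inP => e2 He2; apply/implyP => ne.
move: He1 He2 ne; rewrite /M !inE -!orbA => /or3P [] /eqP -> /or3P [] /eqP ->;
  rewrite ?eqxx // => _; by rewrite // disjoint_sym.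
Qed.

Lemma part_ok a b c : a < 5 -> b < 5 -> c < 5 ->
  partite_edge (fun v : V => v.1) [set vert 0 a; vert 1 b; vert 2 c].
Proof.
move=> Ha Hb Hc; apply/forallP => i; apply/cards1P.
case: i => [[|[|[|m]]] Hm] //.
- exists (vert 0 a); apply/setP => [[x y]]; rewrite !inE /vert !xpair_eqE /= !ieq // -val_eqE /=.
  by case: (val x) => [|[|[|]]]; rewrite ?andbF ?andbT ?orbF.
- exists (vert 1 b); apply/setP => [[x y]]; rewrite !inE /vert !xpair_eqE /= !ieq // -val_eqE /=.
  by case: (val x) => [|[|[|]]]; rewrite ?andbF ?andbT ?orbF.
- exists (vert 2 c); apply/setP => [[x y]]; rewrite !inE /vert !xpair_eqE /= !ieq // -val_eqE /=.
  by case: (val x) => [|[|[|]]]; rewrite ?andbF ?andbT ?orbF.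
Qed.

Theorem theorem1p3 :
  exists (V : finType) (part : V -> 'I_3) (E : {set {set V}}),
    [/\ partite_uniform part E,
        E != set0
      & forall p q : V, nu (delete_vertices E [set p; q]) = nu E].
Proof.
exists V, (fun v : V => v.1), EE; split.
- apply/forall_inP => e /in_EE [k hk ->].
  move: (tri_bnd hk); rewrite /es; case: (tri k) => [[a b] c] /and3P [Ha Hb Hc].
  exact: part_ok.
- by apply/set0Pn; exists (es 0); apply: es_in.
- move=> p q; apply/eqP; rewrite eqn_leq nu_mono; last first.
    by apply/subsetP => e; rewrite inE => /andP [].
  apply: leq_trans nuEE (lower p q).
Qed.
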